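(* Let $f\colon X\to Y$ be a surjective morphism of non-degenerate cycle sets. Then there is a unique brace morphism $A(f)\colon A(X)\to A(Y)$ such that $A(f)\circ\sigma_X=\sigma_Y\circ f$, where $\sigma_X\colon X\to A(X)$ and $\sigma_Y\colon Y\to A(Y)$ are the canonical maps; moreover $A(f)$ is surjective.
   Context: A cycle set is a set $X$ with a binary operation $\cdot$ such that for every $x\in X$ the map $y\mapsto x\cdot y$ is a bijection of $X$, and $(x\cdot y)\cdot(x\cdot z)=(y\cdot x)\cdot(y\cdot z)$ for all $x,y,z$. It is non-degenerate if the map $x\mapsto x\cdot x$ is bijective. A morphism of cycle sets is a map $f$ with $f(x\cdot y)=f(x)\cdot f(y)$. A brace is an abelian group $(A,+)$ with a binary operation $\cdot$ making $A$ a cycle set and satisfying $a\cdot(b+c)=(a\cdot b)+(a\cdot c)$ and $(a+b)\cdot c=(a\cdot b)\cdot(a\cdot c)$; a brace morphism is an additive homomorphism preserving $\cdot$. For a non-degenerate cycle set $X$, $A_X$ denotes the unique brace structure on the free abelian group $\mathbb{Z}^{(X)}$ extending the operation of $X$. The socle of a brace $A$ is $\mathrm{Soc}(A)=\{a\in A: a\cdot b=b \text{ for all } b\in A\}$; it is an ideal, so $A/\mathrm{Soc}(A)$ is a brace. Set $A(X):=A_X/\mathrm{Soc}(A_X)$ and let $\sigma_X\colon X\to A(X)$ be the composite of the inclusion $X\hookrightarrow A_X$ with the quotient map. *)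

(* Defs.v *)
From HB Require Import structures.
From mathcomp Require Import all_boot all_algebra.
Set Implicit Arguments. Unset Strict Implicit. Unset Printing Implicit Defensive.
Import GRing.Theory.
Local Open Scope ring_scope.

Definition surj (A B : Type) (f : A -> B) : Prop := forall b, exists a, f a = b.

Definition is_cycle_set (X : Type) (op : X -> X -> X) : Prop :=
  (forall x, bijective (op x)) /\
  (forall x y z, op (op x y) (op x z) = op (op y x) (op y z)).

Definition non_degenerate (X : Type) (op : X -> X -> X) : Prop :=
  bijective (fun x => op x x).

Definition cs_morphism (X Y : Type) (opX : X -> X -> X) (opY : Y -> Y -> Y)
  (f : X -> Y) : Prop := forall x y, f (opX x y) = opY (f x) (f y).

Definition is_brace (A : zmodType) (op : A -> A -> A) : Prop :=
  [/\ is_cycle_set op,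
      (forall a b c, op a (b + c) = op a b + op a c) &
      (forall a b c, op (a + b) c = op (op a b) (op a c))].

Definition brace_morphism (A B : zmodType) (opA : A -> A -> A)
  (opB : B -> B -> B) (g : A -> B) : Prop :=
  (forall a b, g (a + b) = g a + g b) /\ cs_morphism opA opB g.

Definition socle (A : zmodType) (op : A -> A -> A) (a : A) : Prop :=
  forall b, op a b = b.

Definition free_abelian_on (X : Type) (A : zmodType) (i : X -> A) : Prop :=
  forall (M : zmodType) (h : X -> M),
    exists g : A -> M,
      ((forall a b, g (a + b) = g a + g b) /\ (forall x, g (i x) = h x)) /\
      (forall g' : A -> M,
         (forall a b, g' (a + b) = g' a + g' b) -> (forall x, g' (i x) = h x) ->
         g' = g).

(* (A, opA, i) is the brace A_X: a brace structure on the free abelian group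
   Z^(X) (with basis i(X)) extending the operation of X. *)
Definition is_A_X (X : Type) (opX : X -> X -> X)
  (A : zmodType) (opA : A -> A -> A) (i : X -> A) : Prop :=
  [/\ free_abelian_on i, is_brace opA &
      (forall x y, i (opX x y) = opA (i x) (i y))].

(* (Q, opQ, p) is the quotient brace A / Soc(A): p is a surjective brace
   morphism onto the brace Q whose kernel is exactly Soc(A). *)
Definition is_socle_quotient (A : zmodType) (opA : A -> A -> A)
  (Q : zmodType) (opQ : Q -> Q -> Q) (p : A -> Q) : Prop :=
  [/\ is_brace opQ, brace_morphism opA opQ p, surj p &
      (forall a, p a = 0 <-> socle opA a)].

(* Main.v *)
From HB Require Import structures.
Require Import Defs.
From mathcomp Require Import all_boot all_algebra.
From Stdlib Require Import ClassicalEpsilon FunctionalExtensionality.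
Set Implicit Arguments. Unset Strict Implicit. Unset Printing Implicit Defensive.
Import GRing.Theory.
Local Open Scope ring_scope.

Definition pb (P : Prop) : bool := if excluded_middle_informative P then true else false.
Lemma pbP (P : Prop) : pb P <-> P.
Proof. rewrite /pb; case: excluded_middle_informative => //. Qed.

Section Sub.
Variables (A : zmodType) (P : pred A).
Hypothesis P0 : P 0.
Hypothesis PB : forall a b, P a -> P b -> P (a - b).
Lemma PN a : P a -> P (- a).
Proof. by move=> h; rewrite -sub0r; apply: PB. Qed.
Lemma PD a b : P a -> P b -> P (a + b).
Proof. by move=> ha hb; rewrite -[b]opprK; apply: PB => //; apply: PN. Qed.
Definition St := {a : A | P a}.
Definition s0 : St := exist _ 0 P0.
Definition sopp (x : St) : St := exist _ (- val x) (PN (valP x)).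
Definition sadd (x y : St) : St := exist _ (val x + val y) (PD (valP x) (valP y)).
Lemma saddA : associative sadd.
Proof. by move=> x y z; apply: val_inj; rewrite /= addrA. Qed.
Lemma saddC : commutative sadd.
Proof. by move=> x y; apply: val_inj; rewrite /= addrC. Qed.
Lemma sadd0 : left_id s0 sadd.
Proof. by move=> x; apply: val_inj; rewrite /= add0r. Qed.
Lemma saddN : left_inverse s0 sopp sadd.
Proof. by move=> x; apply: val_inj; rewrite /= addNr. Qed.
HB.instance Definition _ := Choice.on St.
HB.instance Definition _ := GRing.isZmodule.Build St saddA saddC sadd0 saddN.

Lemma free_ind_b (X : Type) (i : X -> A) : free_abelian_on i ->
  (forall x, P (i x)) -> forall a, P a.
Proof.
move=> fr hi a.
have [g [[gD gi] _]] := fr St (fun x => exist _ (i x) (hi x)).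
have [h [[hD hi'] hu]] := fr A i.
have e1 : (fun a => val (g a)) = h.
  apply: hu => [u v|x]; first by rewrite gD.
  by rewrite gi.
have e2 : (fun a => a) = h by apply: hu.
have : val (g a) = a by rewrite (congr1 (fun k => k a) e1) -(congr1 (fun k => k a) e2).
move=> <-; exact: valP.
Qed.
End Sub.

Lemma free_ind (X : Type) (A : zmodType) (i : X -> A) (Q : A -> Prop) :
  free_abelian_on i -> Q 0 ->
  (forall b z, Q b -> Q (b + i z)) -> (forall b z, Q b -> Q (b - i z)) ->
  forall a, Q a.
Proof.
move=> fr Q0 QD QB.
pose R := fun a : A => pb (forall b, Q b -> Q (b + a) /\ Q (b - a)).
have R0 : R 0 by apply/pbP => b qb; rewrite addr0 subr0.
have RB : forall a b, R a -> R b -> R (a - b).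
  move=> a c /pbP ha /pbP hc; apply/pbP => b qb; split.
    by rewrite addrA; apply: (proj2 (hc _ _)); apply: (proj1 (ha _ _)).
  by rewrite opprB addrA; apply: (proj2 (ha _ _)); apply: (proj1 (hc _ _)).
move=> a; have := free_ind_b R0 RB fr.
have hg : forall x, R (i x) by move=> x; apply/pbP => b qb; split; [apply: QD|apply: QB].
move=> /(_ hg a) /pbP /(_ 0 Q0) [+ _]; by rewrite add0r.
Qed.

Section Brace.
Variables (A : zmodType) (op : A -> A -> A).
Hypothesis hb : is_brace op.
Lemma brD a b c : op a (b + c) = op a b + op a c.
Proof. by case: hb. Qed.
Lemma brS a b c : op (a + b) c = op (op a b) (op a c).
Proof. by case: hb. Qed.
Lemma brbij a : bijective (op a).
Proof. by case: hb => [[]]. Qed.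
Lemma br0 a : op a 0 = 0.
Proof. have h : op a 0 + op a 0 = op a 0 + 0 by rewrite -brD !addr0.
exact: (addrI _ h). Qed.
Lemma brN a b : op a (- b) = - op a b.
Proof. by apply/eqP; rewrite -addr_eq0 -brD addNr br0. Qed.
Lemma op0 c : op 0 c = c.
Proof.
have h : op 0 (op 0 c) = op 0 c.
  have e : op 0 c = op (0 + 0) c by rewrite addr0.
  by rewrite [RHS]e brS br0.
exact: (bij_inj (brbij 0) h).
Qed.
Lemma brinv a c : op (- op a a) (op a c) = c.
Proof. by rewrite -brN -brS addrN op0. Qed.
Lemma brsurj a d : exists e, op a e = d.
Proof. have [g _ h] := brbij a; by exists (g d); rewrite h. Qed.
End Brace.

Section Add.
Variables (A B : zmodType) (g : A -> B).
Hypothesis gD : forall a b, g (a + b) = g a + g b.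
Lemma g0 : g 0 = 0.
Proof. have h : g 0 + g 0 = g 0 + 0 by rewrite -gD !addr0.
exact: (addrI _ h). Qed.
Lemma gN a : g (- a) = - g a.
Proof. by apply/eqP; rewrite -addr_eq0 -gD addNr g0. Qed.
Lemma gB a b : g (a - b) = g a - g b.
Proof. by rewrite gD gN. Qed.
End Add.

Theorem mainTheorem4
  (X Y : Type) (opX : X -> X -> X) (opY : Y -> Y -> Y)
  (hX : is_cycle_set opX) (ndX : non_degenerate opX)
  (hY : is_cycle_set opY) (ndY : non_degenerate opY)
  (f : X -> Y) (hf : cs_morphism opX opY f) (sf : surj f)
  (AX : zmodType) (opAX : AX -> AX -> AX) (iX : X -> AX)
  (hAX : is_A_X opX opAX iX)
  (QX : zmodType) (opQX : QX -> QX -> QX) (pX : AX -> QX)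
  (hQX : is_socle_quotient opAX opQX pX)
  (AY : zmodType) (opAY : AY -> AY -> AY) (iY : Y -> AY)
  (hAY : is_A_X opY opAY iY)
  (QY : zmodType) (opQY : QY -> QY -> QY) (pY : AY -> QY)
  (hQY : is_socle_quotient opAY opQY pY) :
  exists Af : QX -> QY,
    [/\ brace_morphism opQX opQY Af,
        (forall x, Af (pX (iX x)) = pY (iY (f x))),
        (forall g : QX -> QY, brace_morphism opQX opQY g ->
           (forall x, g (pX (iX x)) = pY (iY (f x))) -> g = Af) &
        surj Af].
Proof.
case: hAX => frX bX iXop.
case: hAY => frY bY iYop.
case: hQX => bQX [pXD pXop] pXs pXk.
case: hQY => bQY [pYD pYop] pYs pYk.
have [wX wXK Kw] := ndX.
have pres : forall a x, exists x', opAX a (iX x) = iX x'.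
  apply: (@free_ind _ _ _ (fun a => forall x, exists x', opAX a (iX x) = iX x') frX).
  - by move=> x; exists x; rewrite op0.
  - move=> b z IH x; have [z' e1] := IH z; have [x'' e2] := IH x.
    by exists (opX z' x''); rewrite (brS bX) e1 e2 iXop.
  - move=> b z IH x; have [z' e1] := IH z; have [x'' e2] := IH x.
    have [g _ gK] := (proj1 hX) (wX z').
    exists (g x''); rewrite (brS bX) (brN bX) e1 e2.
    rewrite -{1}(Kw z') iXop -{1}(gK x'') iXop.
    exact: (brinv bX).
have [F [[FD Fi] _]] := frX AY (fun x => iY (f x)).
have Fgen : forall z c, F (opAX (iX z) c) = opAY (iY (f z)) (F c).
  move=> z; apply: (@free_ind _ _ _ (fun c => F (opAX (iX z) c) = opAY (iY (f z)) (F c)) frX).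
  - by rewrite (br0 bX) (g0 FD) (br0 bY).
  - move=> b x IH; by rewrite (brD bX) FD IH FD (brD bY) -iXop !Fi hf iYop.
  - move=> b x IH; by rewrite (brD bX) FD IH (brN bX) (gN FD) -iXop Fi (gB FD)
       (brD bY) (brN bY) Fi hf iYop.
have Fop : forall a c, F (opAX a c) = opAY (F a) (F c).
  apply: (@free_ind _ _ _ (fun a => forall c, F (opAX a c) = opAY (F a) (F c)) frX).
  - by move=> c; rewrite (op0 bX) (g0 FD) (op0 bY).
  - move=> b z IH c; have [z' e1] := pres b z.
    by rewrite (brS bX) e1 Fgen -Fi -e1 !IH FD (brS bY).
  - move=> b z IH c; have [z' e1] := pres b z.
    have [e he] := brsurj bX (iX (wX z')) (opAX b c).
    rewrite (brS bX) (brN bX) e1 -{1}(Kw z') iXop -he (brinv bX).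
    rewrite (gB FD) (brS bY) (brN bY) -IH -IH e1 -he Fgen -{1}(Kw z') Fi hf iYop.
    by rewrite (brinv bY).
have Fsoc : forall s, socle opAX s -> socle opAY (F s).
  move=> s hs; apply: (@free_ind _ _ _ (fun c => opAY (F s) c = c) frY).
  - by rewrite /= (br0 bY).
  - move=> b y IH; have [x <-] := sf y.
    by rewrite (brD bY) IH -Fi -Fop hs.
  - move=> b y IH; have [x <-] := sf y.
    by rewrite (brD bY) IH (brN bY) -Fi -Fop hs.
have wd : forall a a', pX a = pX a' -> pY (F a) = pY (F a').
  move=> a a' e; apply/eqP; rewrite -subr_eq0 -(gB pYD) -(gB FD).
  by apply/eqP/pYk/Fsoc/pXk; rewrite (gB pXD) e subrr.
pose rep q := proj1_sig (constructive_indefinite_description _ (pXs q)).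
have repP q : pX (rep q) = q := proj2_sig (constructive_indefinite_description _ (pXs q)).
pose Af q := pY (F (rep q)).
have AfE : forall a, Af (pX a) = pY (F a) by move=> a; apply: wd; rewrite repP.
exists Af; split.
- split.
  + move=> q1 q2; have [a1 <-] := pXs q1; have [a2 <-] := pXs q2.
    by rewrite -pXD !AfE FD pYD.
  + move=> q1 q2; have [a1 <-] := pXs q1; have [a2 <-] := pXs q2.
    by rewrite -pXop !AfE Fop pYop.
- by move=> x; rewrite AfE Fi.
- move=> g [gD gop] gi; apply: functional_extensionality => q.
  have [a <-] := pXs q; rewrite AfE; move: a.
  apply: (@free_ind _ _ _ (fun a => g (pX a) = pY (F a)) frX).
  + by rewrite (g0 pXD) (g0 gD) (g0 FD) (g0 pYD).
  + by move=> b x IH; rewrite pXD gD IH gi FD pYD Fi.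
  + by move=> b x IH; rewrite (gB pXD) (gB gD) IH gi (gB FD) (gB pYD) Fi.
- move=> q; have [b <-] := pYs q.
  suff [a <-] : exists a, F a = b by exists (pX a); rewrite AfE.
  move: b; apply: (@free_ind _ _ _ (fun b => exists a, F a = b) frY).
  + by exists 0; rewrite (g0 FD).
  + move=> b y [a <-]; have [x <-] := sf y.
    by exists (a + iX x); rewrite FD Fi.
  + move=> b y [a <-]; have [x <-] := sf y.
    by exists (a - iX x); rewrite (gB FD) Fi.
Qed.
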